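(* Let $p$ be a prime and $G_p=\mathbb{Z}_{p^{r_1}}^{k_1}\oplus\cdots\oplus\mathbb{Z}_{p^{r_n}}^{k_n}$ a finite abelian $p$-group with $r_1<\cdots<r_n$, $k_i\ge1$. If $g$ and $h$ are representative elements of $G_p$ that are automorphically equivalent (under an automorphism of $G_p$), then $g=h$. Consequently every element of $G_p$ is automorphically equivalent to a unique representative element of $G_p$.
   Context: Two elements are automorphically equivalent if some group automorphism maps one to the other. Elements of $\mathbb{Z}_{p^r}$ are identified with integers in $\{0,\dots,p^r-1\}$; a power of $p$ in $\mathbb{Z}_{p^r}$ means $p^s$ with $0\le s<r$. The repeat-free subgroup of $G_p$ is $G_p^{rf}=\mathbb{Z}_{p^{r_1}}\oplus\cdots\oplus\mathbb{Z}_{p^{r_n}}$, one copy of each distinct cyclic factor (direct summand of $G_p$). An element $g=(g_1,\dots,g_n)\in G_p^{rf}$ is a representative element of $G_p^{rf}$ if (1) every $g_i$ is $0$ or a power of $p$; (2) for all $i<j$ with $g_i,g_j$ nonzero, $g_i<g_j$; (3) for all $i<j$ with $g_i,g_j$ nonzero, the order of $g_i$ in $\mathbb{Z}_{p^{r_i}}$ is less than the order of $g_j$ in $\mathbb{Z}_{p^{r_j}}$. A representative element of $G_p$ is an element of $G_p^{rf}$ (all other coordinates $0$) which is a representative element of $G_p^{rf}$. *)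

(* Defs.v *)
From HB Require Import structures.
From mathcomp Require Import all_boot all_order all_algebra all_fingroup.
Set Implicit Arguments. Unset Strict Implicit. Unset Printing Implicit Defensive.

(* Index set of the cyclic factors: pairs (i, j) with i < n, j < k i. *)
Definition Gidx (n : nat) (k : 'I_n -> nat) := {i : 'I_n & 'I_(k i)}.

Definition Gp (p n : nat) (r k : 'I_n -> nat) :=
  {dffun forall x : Gidx k, 'Z_(p ^ r (tag x))}.

Definition Gadd p n (r k : 'I_n -> nat) (a b : Gp p r k) : Gp p r k :=
  finfun (fun x => (a x + b x)%R).

Definition is_aut p n (r k : 'I_n -> nat) (f : Gp p r k -> Gp p r k) : Prop :=
  bijective f /\ forall a b, f (Gadd a b) = Gadd (f a) (f b).

Definition aut_equiv p n (r k : 'I_n -> nat) (g h : Gp p r k) : Prop :=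
  exists f, is_aut f /\ f g = h.

(* g lies in the repeat-free subgroup: only the first copy of each factor
   may be nonzero. *)
Definition in_rf p n (r k : 'I_n -> nat) (g : Gp p r k) : Prop :=
  forall x : Gidx k, 0 < val (tagged x) -> g x = 0%R.

Definition zero_or_ppow (p r : nat) (a : 'Z_(p ^ r)) : Prop :=
  a = 0%R \/ exists2 s, s < r & val a = p ^ s.

Definition representative p n (r k : 'I_n -> nat) (g : Gp p r k) : Prop :=
  [/\ in_rf g,
      (forall x : Gidx k, val (tagged x) = 0 -> zero_or_ppow (g x))
    & (forall x y : Gidx k, val (tagged x) = 0 -> val (tagged y) = 0 ->
        tag x < tag y -> g x != 0%R -> g y != 0%R ->
        val (g x) < val (g y) /\ (#[g x]%g < #[g y]%g)%N)].

(* Main.v *)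
Require Import Defs.
From HB Require Import structures.
From mathcomp Require Import all_boot all_order all_algebra all_fingroup all_solvable.
From mathcomp Require Import zify.
From Stdlib Require Import Classical.
Set Implicit Arguments. Unset Strict Implicit. Unset Printing Implicit Defensive.
Import GRing.Theory.

Section ZpFacts.
Variable m : nat.
Hypothesis Hm : 1 < m.

Lemma zvalN N : val (N%:R : 'Z_m)%R = N %% m.
Proof. exact: val_Zp_nat. Qed.

Lemma zE (a : 'Z_m) : a = (val a)%:R%R.
Proof. by rewrite natr_Zp. Qed.

Lemma zmulrn (a : 'Z_m) t : val (a *+ t)%R = (val a * t) %% m.
Proof. by rewrite [in LHS](zE a) -mulrnA -zvalN. Qed.

Lemma zlt (a : 'Z_m) : val a < m.
Proof. case: a => v /=; by rewrite Zp_cast. Qed.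

Lemma zeq (a b : 'Z_m) : val a = val b -> a = b.
Proof. exact: val_inj. Qed.

Lemma zord (a : 'Z_m) : #[a]%g = m %/ gcdn m (val a).
Proof.
have E : a = (Zp1 ^+ (val a))%g by rewrite Zp1_expgz.
rewrite {1}E orderXgcd order_Zp1; case: a {E} => v /=.
by rewrite Zp_cast.
Qed.

Lemma znorm (a : 'Z_m) p R : prime p -> m = p ^ R -> a != 0%R ->
  exists2 u : 'Z_m, u \is a GRing.unit & exists2 s, s < R & val (a * u)%R = p ^ s.
Proof.
move=> pP mE anz.
have vpos : 0 < val a by rewrite lt0n; apply: contra anz => /eqP h; apply/eqP/val_inj.
have [w cw vE] := pfactor_coprime pP vpos.
set s := logn p (val a) in vE.
have uw : (w%:R : 'Z_m)%R \is a GRing.unit.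
  by rewrite unitZpE // mE coprimeXl // coprime_sym.
exists (w%:R)^-1%R; first by rewrite unitrV.
have ps : p ^ s < m.
  have := zlt a; rewrite vE => h; apply: leq_ltn_trans h.
  by rewrite leq_pmull // lt0n; apply: contraTneq vpos => w0; rewrite vE w0.
exists s.
  by rewrite -(ltn_exp2l _ _ (prime_gt1 pP)) -mE.
by rewrite (zE a) vE natrM mulrC mulrA mulVr // mul1r zvalN modn_small.
Qed.

End ZpFacts.
Section Main.
Variables (p n : nat) (r k : 'I_n -> nat).
Hypothesis pP : prime p.
Hypothesis rpos : forall i, 0 < r i.
Hypothesis rmono : forall i j : 'I_n, i < j -> r i < r j.
Hypothesis kpos : forall i, 0 < k i.

Local Notation G := (Gp p r k).
Local Notation I := (Gidx k).
Local Notation RR x := (r (tag x)).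

Lemma p_gt1 : 1 < p. Proof. exact: prime_gt1. Qed.
Lemma M_gt1 (x : I) : 1 < p ^ RR x.
Proof. by rewrite -(expn0 p) ltn_exp2l ?p_gt1 ?rpos. Qed.

Definition Gsmul (t : nat) (a : G) : G := finfun (fun x => (a x *+ t)%R).

Definition Inv (a t : nat) (g : G) := exists y, Gsmul (p ^ t) g = Gsmul (p ^ a) y.

Definition additive (f : G -> G) := forall a b, f (Gadd a b) = Gadd (f a) (f b).

Lemma add_smul f : additive f -> forall t a, f (Gsmul t.+1 a) = Gsmul t.+1 (f a).
Proof.
move=> fA; elim=> [|t IH] a.
  have E b : Gsmul 1 b = b by apply/ffunP => x; rewrite ffunE mulr1n.
  by rewrite !E.
have E b : Gsmul t.+2 b = Gadd b (Gsmul t.+1 b).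
  by apply/ffunP => x; rewrite !ffunE mulrS.
by rewrite E fA IH -E.
Qed.

Lemma Inv_add f a t g : additive f -> Inv a t g -> Inv a t (f g).
Proof.
move=> fA [y E]; exists (f y).
have pt : forall u, exists v, p ^ u = v.+1.
  by move=> u; exists (p ^ u).-1; rewrite prednK // expn_gt0 prime_gt0.
have [v1 E1] := pt t; have [v2 E2] := pt a; rewrite E1 E2 in E *.
by rewrite -!(add_smul fA); congr f.
Qed.

Lemma Inv_aut g h : aut_equiv g h -> forall a t, Inv a t g <-> Inv a t h.
Proof.
move=> [f [[[f' fK f'K] fA] <-]] a t; split; first exact: Inv_add.
have f'A : additive f'.
  move=> u v; by rewrite -{1}(f'K u) -{1}(f'K v) -fA fK.
by move/(Inv_add f'A); rewrite fK.
Qed.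


Lemma zinv (R : nat) (c : 'Z_(p ^ R)) a t : 0 < R ->
  zero_or_ppow c ->
  (exists y : 'Z_(p ^ R), (c *+ p ^ t = y *+ p ^ a)%R) <->
  (forall s, s < R -> val c = p ^ s -> R <= t + s \/ a <= t + s).
Proof.
move=> R0 cN.
have Hm : 1 < p ^ R by rewrite -(expn0 p) ltn_exp2l ?p_gt1.
split.
  move=> [y E] s sR cE.
  case: (leqP R (t + s)) => h; first by left.
  case: (leqP a (t + s)) => h2; first by right.
  exfalso.
  have := congr1 val E; rewrite !zmulrn // cE -expnD => E'.
  have lt1 : p ^ (s + t) < p ^ R by rewrite ltn_exp2l ?p_gt1 //; lia.
  have d1 : p ^ (s + t).+1 %| p ^ R by rewrite dvdn_exp2l //; lia.
  have d2 : p ^ (s + t).+1 %| val y * p ^ a by rewrite dvdn_mull // dvdn_exp2l //; lia.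
  have : p ^ (s + t) %% p ^ (s + t).+1 = 0.
    rewrite -{1}[p ^ (s + t)](modn_small lt1) E' modn_dvdm //; by move/dvdnP: d2 => [q ->]; rewrite modnMl.
  rewrite modn_small ?ltn_exp2l ?p_gt1 //.
  move=> E0; have hp : 0 < p ^ (s + t) by rewrite expn_gt0 (prime_gt0 pP).
  by rewrite E0 in hp.
move=> H; case: cN => [c0|[s0 sR cE]].
  by exists 0%R; rewrite c0 !mul0rn.
have [h|h] := H s0 sR cE.
  exists 0%R; apply: val_inj; rewrite zmulrn // cE mul0rn /= -expnD.
  by apply/eqP; rewrite -/(dvdn _ _) dvdn_exp2l //; lia.
exists ((p ^ (t + s0 - a))%:R)%R; apply: val_inj; rewrite (zmulrn Hm c) (zmulrn Hm (_%:R)%R) (zvalN Hm) cE modnMml -!expnD.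
by congr (p ^ _ %% _); lia.
Qed.

Definition normal (g : G) := forall x, zero_or_ppow (g x).

Lemma Inv_char g a t : normal g -> (Inv a t g <->
  forall x s, s < RR x -> val (g x) = p ^ s -> RR x <= t + s \/ a <= t + s).
Proof.
move=> gN; split.
  move=> [y E] x s sR gx.
  have Ex := congr1 (fun h : G => h x) E; rewrite /= !ffunE in Ex.
  by apply: (proj1 (zinv a t (rpos (tag x)) (gN x))) => //; exists (y x).
move=> H.
have H' : forall x, exists yx : 'Z_(p ^ RR x), (g x *+ p ^ t = yx *+ p ^ a)%R.
  by move=> x; apply/(zinv a t (rpos (tag x)) (gN x)) => s sR gx; apply: H.
have [u Hu] := fin_all_exists H'.
exists (finfun u); apply/ffunP => x; rewrite !ffunE; exact: Hu.
Qed.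


Lemma pexpI a b : p ^ a = p ^ b -> a = b.
Proof. by move=> E; apply/eqP; rewrite -(eqn_exp2l _ _ p_gt1) E. Qed.

Definition Fp (g : G) a t := exists x s,
  [/\ s < RR x, val (g x) = p ^ s, t + s < RR x & t + s < a].

Lemma Inv_F g a t : normal g -> (Inv a t g <-> ~ Fp g a t).
Proof.
move=> gN; rewrite (Inv_char _ _ gN); split.
  move=> H [x [s [sR gx h1 h2]]]; have := H x s sR gx; lia.
move=> H x s sR gx.
case: (leqP (RR x) (t + s)) => h1; first by left.
case: (leqP a (t + s)) => h2; first by right.
by exfalso; apply: H; exists x, s.
Qed.

Definition anti (g : G) := forall x y sx sy,
  sx < RR x -> val (g x) = p ^ sx -> sy < RR y -> val (g y) = p ^ sy ->
  sx <= sy -> RR y - sy <= RR x - sx -> x = y.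

Definition corner (g : G) R0 s :=
  [/\ ~ Inv R0 (R0 - s - 1) g, Inv R0.+1 (R0 - s) g & Inv R0.-1 (R0 - s - 1) g].

Lemma corner_iff g R0 s : normal g -> anti g -> s < R0 ->
  (corner g R0 s <-> exists2 z, RR z = R0 & val (g z) = p ^ s).
Proof.
move=> gN gA sR0; have IF := fun a t => Inv_F a t gN; split.
  move=> [C1 C2 C3].
  have [x [sx [sxR gx h1 h2]]] : Fp g R0 (R0 - s - 1).
    by apply: NNPP => nF; apply: C1; apply/(IF _ _).2.
  have F1 := (IF _ _).1 C2; have F2 := (IF _ _).1 C3.
  have e1 : RR x - sx <= R0 - s.
    case: (leqP (RR x - sx) (R0 - s)) => // h; exfalso; apply: F1.
    exists x, sx; split => //; lia.
  have e2 : s <= sx.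
    case: (leqP s sx) => // h; exfalso; apply: F2.
    exists x, sx; split => //; lia.
  exists x => //; first lia.
  by rewrite gx; congr (p ^ _); lia.
move=> [z zR gz]; split.
- move/(IF _ _).1; apply; exists z, s; split => //; lia.
- apply/(IF _ _).2; move=> [x [sx [sxR gx h1 h2]]].
  have xz := gA x z sx s sxR gx ltac:(lia) gz ltac:(lia) ltac:(lia).
  by subst z; rewrite gz in gx; have := pexpI gx; lia.
- apply/(IF _ _).2; move=> [x [sx [sxR gx h1 h2]]].
  have xz := gA x z sx s sxR gx ltac:(lia) gz ltac:(lia) ltac:(lia).
  by subst z; rewrite gz in gx; have := pexpI gx; lia.
Qed.


Lemma r_inj i j : r i = r j -> i = j.
Proof.
move=> E; case: (ltngtP i j) => h; last exact: val_inj.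
  by have := rmono h; rewrite E ltnn.
by have := rmono h; rewrite E ltnn.
Qed.

Lemma idx_eq (x y : I) : tag x = tag y -> val (tagged x) = val (tagged y) -> x = y.
Proof. case: x => i j; case: y => i' j' /= e; subst i' => /val_inj -> //. Qed.

Lemma ord_pow R (c : 'Z_(p ^ R)) s : 0 < R -> val c = p ^ s -> s <= R ->
  #[c]%g = p ^ (R - s).
Proof.
move=> R0 cE sR.
have Hm : 1 < p ^ R by rewrite -(expn0 p) ltn_exp2l ?p_gt1.
rewrite (zord Hm) cE (gcdn_idPr (dvdn_exp2l p sR)) expnB //.
exact: prime_gt0.
Qed.

Lemma pow_nz R (c : 'Z_(p ^ R)) s : val c = p ^ s -> c != 0%R.
Proof.
move=> cE; apply/eqP => c0; move: cE; rewrite c0 /= => E.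
by have := expn_gt0 p s; rewrite (prime_gt0 pP) -E.
Qed.

Lemma rep_first (g : G) x : representative g -> g x != 0%R -> val (tagged x) = 0.
Proof.
move=> [rf _ _] nz; case: (posnP (val (tagged x))) => // h.
by move: nz; rewrite rf ?eqxx.
Qed.

Lemma rep_normal g : representative g -> normal g.
Proof.
move=> gR x; case: (posnP (val (tagged x))) => h.
  by case: gR => _ H _; apply: H.
by case: gR => rf _ _; left; apply: rf.
Qed.

Lemma rep_anti g : representative g -> anti g.
Proof.
move=> gR x y sx sy sxR gx syR gy h1 h2.
have x0 := rep_first gR (pow_nz gx).
have y0 := rep_first gR (pow_nz gy).
case: (ltngtP (tag x) (tag y)) => h.
- case: gR => _ _ H; have [_] := H x y x0 y0 h (pow_nz gx) (pow_nz gy).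
  rewrite (ord_pow (rpos _) gx (ltnW sxR)) (ord_pow (rpos _) gy (ltnW syR)).
  rewrite ltn_exp2l ?p_gt1 // => hh; by have := leq_trans hh h2; rewrite ltnn.
- case: gR => _ _ H; have [] := H y x y0 x0 h (pow_nz gy) (pow_nz gx).
  rewrite gx gy ltn_exp2l ?p_gt1 //; lia.
- apply: idx_eq; first exact: val_inj h. transitivity 0; [exact: x0 | exact: (esym y0)].
Qed.

Lemma transfer g h : representative g -> representative h ->
  (forall a t, Inv a t g <-> Inv a t h) ->
  forall x s, s < RR x -> val (g x) = p ^ s -> val (h x) = p ^ s.
Proof.
move=> gR hR E x s sR gx.
have Cg : corner g (RR x) s.
  by apply/(corner_iff (rep_normal gR) (rep_anti gR) sR); exists x.
have Ch : corner h (RR x) s.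
  by case: Cg => A B C; split; [rewrite -E | rewrite -E | rewrite -E].
have [z zR hz] := (proj1 (corner_iff (rep_normal hR) (rep_anti hR) sR)) Ch.
have -> // : x = z.
apply: idx_eq; first exact: r_inj.
by rewrite (rep_first gR (pow_nz gx)) (rep_first hR (pow_nz hz)).
Qed.

Lemma uniq_rep g h : representative g -> representative h ->
  (forall a t, Inv a t g <-> Inv a t h) -> g = h.
Proof.
move=> gR hR E; apply/ffunP => x.
have E' : forall a t, Inv a t h <-> Inv a t g by move=> a t; apply: iff_sym.
case: (rep_normal gR x) => [g0|[s sR gx]].
  case: (rep_normal hR x) => [-> //|[s sR hx]].
  by have := transfer hR gR E' sR hx; rewrite g0 => /pow_nz; rewrite eqxx.
by apply: val_inj; rewrite gx (transfer gR hR E sR gx).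
Qed.


Lemma aut_refl (g : G) : aut_equiv g g.
Proof. by exists id; split => //; split => //; exists id. Qed.

Lemma aut_trans (g h u : G) : aut_equiv g h -> aut_equiv h u -> aut_equiv g u.
Proof.
move=> [f1 [[b1 a1] e1]] [f2 [[b2 a2] e2]]; exists (f2 \o f1); split; last by rewrite /= e1.
split; first exact: bij_comp.
by move=> a b /=; rewrite a1 a2.
Qed.

Lemma aut_inj (f : G -> G) (g : G) : injective f -> additive f -> aut_equiv g (f g).
Proof. by move=> fI fA; exists f; split => //; split => //; apply: injF_bij. Qed.

Lemma zvalD R (u v : 'Z_(p ^ R)) : 0 < R -> val (u + v)%R = (val u + val v) %% p ^ R.
Proof.
move=> R0; have Hm : 1 < p ^ R by rewrite -(expn0 p) ltn_exp2l ?p_gt1.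
by rewrite [u]zE [v]zE -natrD !(zvalN Hm) modnDm.
Qed.

Lemma modmul X Mc Md m : Md %| Mc * m -> (X %% Mc * m) %% Md = (X * m) %% Md.
Proof.
move=> /dvdnP [w Ew].
by rewrite {2}(divn_eq X Mc) mulnDl -mulnA Ew mulnA modnMDl.
Qed.

Definition transv (c d : I) (m : nat) (g : G) : G :=
  finfun (fun x => if x == d then (g x + (val (g c) * m)%:R)%R else g x).

Lemma transv_aut c d m g : c != d -> p ^ RR d %| p ^ RR c * m ->
  aut_equiv g (transv c d m g).
Proof.
move=> cd dv; apply: aut_inj.
  move=> a b /ffunP E.
  have Ec : a c = b c by have := E c; rewrite !ffunE (negbTE cd).
  apply/ffunP => x; have := E x; rewrite !ffunE.
  case: eqP => // _; rewrite Ec; exact: addIr.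
move=> a b; apply/ffunP => x; rewrite !ffunE.
case: eqP => [e|_] //.
subst x.
have Hm : 1 < p ^ RR d by apply: M_gt1.
rewrite (zvalD _ _ (rpos _)) -(Zp_nat_mod Hm) modmul // (Zp_nat_mod Hm) mulnDl natrD.
by rewrite -!addrA; congr (_ + _)%R; rewrite addrCA.
Qed.

Lemma transv_val c d m g x : transv c d m g x =
  if x == d then (g x + (val (g c) * m)%:R)%R else g x.
Proof. by rewrite ffunE. Qed.

Definition scal (u : forall x : I, 'Z_(p ^ RR x)) (g : G) : G :=
  finfun (fun x => (g x * u x)%R).

Lemma normalize g : exists2 g', normal g' & aut_equiv g g'.
Proof.
have H : forall x, exists u : 'Z_(p ^ RR x),
    u \is a GRing.unit /\ zero_or_ppow (g x * u)%R.
  move=> x; case: (eqVneq (g x) 0%R) => gx.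
    by exists 1%R; split; [exact: unitr1 | left; rewrite gx mul0r].
  have [u uU [s sR E]] := znorm (M_gt1 x) pP erefl gx.
  by exists u; split => //; right; exists s.
have [u Hu] := fin_all_exists H.
exists (scal u g).
  by move=> x; rewrite ffunE; case: (Hu x).
apply: aut_inj.
  move=> a b /ffunP E; apply/ffunP => x; have := E x; rewrite !ffunE.
  by apply: mulIr; case: (Hu x).
by move=> a b; apply/ffunP => x; rewrite !ffunE mulrDl.
Qed.


Definition zap (d : I) (g : G) : G := finfun (fun y => if y == d then 0%R else g y).
Definition wt (y : I) : nat := (0 < val (tagged y)).+1.
Definition mu (g : G) := \sum_(y : I) wt y * (g y != 0%R).

Lemma mu_lt (g g' : G) x x0 :
  (forall y, y != x0 -> g' y != 0%R -> g y != 0%R) -> g x != 0%R -> g' x = 0%R ->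
  (x0 == x) || (wt x0 < wt x) -> mu g' < mu g.
Proof.
move=> H gx g'x cond.
rewrite /mu (bigD1 x) //= [X in _ < X](bigD1 x) //= g'x eqxx gx muln0 add0n muln1.
have wpos : 0 < wt x by [].
case: (eqVneq x0 x) => [e|ne].
  subst x0.
  have le : \sum_(i | i != x) wt i * (g' i != 0%R) <= \sum_(i | i != x) wt i * (g i != 0%R).
    apply: leq_sum => i ni; case E: (g' i != 0%R); last by rewrite muln0.
    by rewrite (H i ni E).
  apply: (leq_ltn_trans le); by rewrite addnC -addn1 leq_add2l.
move: cond; rewrite (negbTE ne) /= => wlt.
rewrite (bigD1 x0) //= [X in _ < _ + X](bigD1 x0) //=.
have le : \sum_(i | (i != x) && (i != x0)) wt i * (g' i != 0%R) <=
          \sum_(i | (i != x) && (i != x0)) wt i * (g i != 0%R).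
  apply: leq_sum => i /andP [_ ni]; case E: (g' i != 0%R); last by rewrite muln0.
  by rewrite (H i ni E).
have l1 : wt x0 * (g' x0 != 0%R) <= wt x0 by case: (g' x0 != 0%R); rewrite ?muln1 ?muln0.
apply: (leq_ltn_trans (leq_add l1 le)); rewrite addnA ltn_add2r.
by apply: (leq_trans wlt); apply: leq_addr.
Qed.

Lemma zap_normal d g : normal g -> normal (zap d g).
Proof. by move=> gN y; rewrite ffunE; case: eqP => _; [left | apply: gN]. Qed.

Lemma zap_mu d (g : G) : g d != 0%R -> mu (zap d g) < mu g.
Proof.
move=> gd; apply: (@mu_lt g (zap d g) d d) => //.
- by move=> y yd; rewrite ffunE (negbTE yd).
- by rewrite ffunE eqxx.
- by rewrite eqxx.
Qed.

Lemma kill (g : G) c d sc sd : c != d -> sc < RR c -> val (g c) = p ^ sc ->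
  sd < RR d -> val (g d) = p ^ sd -> sc <= sd -> RR d - sd <= RR c - sc ->
  aut_equiv g (zap d g).
Proof.
move=> cd scR gc sdR gd h1 h2.
set m := p ^ (sd - sc) * (p ^ RR d - 1).
have dv : p ^ RR d %| p ^ RR c * m.
  rewrite /m mulnA -expnD; apply: dvdn_mulr; apply: dvdn_exp2l; lia.
suff -> : zap d g = transv c d m g by apply: transv_aut.
apply/ffunP => x; rewrite !ffunE; case: eqP => [e|//]; subst x.
have Hm : 1 < p ^ RR d by apply: M_gt1.
rewrite [g d]zE gd gc -natrD.
have -> : p ^ sd + p ^ sc * m = p ^ sd * p ^ RR d.
  rewrite /m mulnA -expnD subnKC // mulnBr muln1 addnC subnK //.
  by rewrite leq_pmulr // expn_gt0 prime_gt0.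
by rewrite natrM pchar_Zp // mulr0.
Qed.


Definition first (i : 'I_n) : I := existT (fun i => 'I_(k i)) i (Ordinal (kpos i)).

Lemma norm_nz (g : G) x : normal g -> g x != 0%R ->
  exists2 s, s < RR x & val (g x) = p ^ s.
Proof. by move=> gN nz; case: (gN x) => [e|//]; rewrite e eqxx in nz. Qed.

Lemma stepA (g : G) (x : I) : normal g -> 0 < val (tagged x) -> g x != 0%R ->
  exists2 g', normal g' & aut_equiv g g' /\ mu g' < mu g.
Proof.
move=> gN hx nz; have [sx sxR gx] := norm_nz gN nz.
set x0 := first (tag x).
have nx0 : x0 != x by apply/eqP => e; move: hx; rewrite -e.
case: (eqVneq (g x0) 0%R) => g0.
  set g1 := transv x x0 1 g.
  have e1 : aut_equiv g g1 by apply: transv_aut; rewrite 1?eq_sym // muln1.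
  have nx0' : x != x0 by rewrite eq_sym.
  have g1x : g1 x = g x by rewrite ffunE (negbTE nx0').
  have Hm : 1 < p ^ RR x by apply: M_gt1.
  have g1x0 : val (g1 x0) = p ^ sx.
    rewrite ffunE eqxx g0 add0r muln1 (zvalN Hm) modn_small ?gx //.
    by rewrite -gx; apply: zlt.
  have e2 : aut_equiv g1 (zap x g1).
    apply: (kill (c := x0) (d := x) (sc := sx) (sd := sx)) => //.
    by rewrite /g1 ffunE (negbTE nx0').
  exists (zap x g1); last split.
  - move=> y; rewrite ffunE; case: (eqVneq y x) => [_|ny]; first by left.
    case: (eqVneq y x0) => [->|ny0]; first by right; exists sx.
    by rewrite ffunE (negbTE ny0); apply: gN.
  - exact: aut_trans e1 e2.
  - apply: (@mu_lt g (zap x g1) x x0) => //.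
    + move=> y ny0; rewrite ffunE; case: (eqVneq y x) => [->|nyx]; first by rewrite eqxx.
      by rewrite ffunE (negbTE ny0).
    + by rewrite ffunE eqxx.
    + by rewrite /wt hx; apply/orP; right.
have [s0 s0R g0v] := norm_nz gN g0.
case: (leqP s0 sx) => hs.
  exists (zap x g); first exact: zap_normal.
  split; last exact: zap_mu.
  apply: (kill (c := x0) (d := x) (sc := s0) (sd := sx)) => //.
  rewrite /x0 /=; lia.
exists (zap x0 g); first exact: zap_normal.
split; last exact: zap_mu.
apply: (kill (c := x) (d := x0) (sc := sx) (sd := s0)) => //; last first.
  rewrite /x0 /=; lia.
  exact: ltnW.
by rewrite eq_sym.

Qed.


Lemma step (g : G) : normal g -> ~ representative g ->
  exists2 g', normal g' & aut_equiv g g' /\ mu g' < mu g.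
Proof.
move=> gN nrep.
case: (classic (exists x : I, 0 < val (tagged x) /\ g x != 0%R)) => [[x [hx nz]]|HA].
  exact: stepA hx nz.
have rf : in_rf g.
  move=> y hy; case: (eqVneq (g y) 0%R) => // nz.
  by exfalso; apply: HA; exists y.
case: (classic (exists x y : I, val (tagged x) = 0 /\ val (tagged y) = 0 /\ tag x < tag y /\
    g x != 0%R /\ g y != 0%R /\ ~ (val (g x) < val (g y) /\ (#[g x]%g < #[g y]%g)%N)))
    => [[x [y [x0 [y0 [xy [gx0 [gy0 V]]]]]]]|HV]; last first.
  exfalso; apply: nrep; split => //.
  move=> x y hx hy hxy gx gy; apply: NNPP => nn; apply: HV; exists x, y; do 5 (split => //).
have [sx sxR gx] := norm_nz gN gx0.
have [sy syR gy] := norm_nz gN gy0.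
have Rxy := rmono xy.
have nxy : x != y by apply/eqP => e; move: xy; rewrite e ltnn.
case: (leqP sy sx) => hs.
  exists (zap x g); first exact: zap_normal.
  split; last exact: zap_mu.
  apply: (kill (c := y) (d := x) (sc := sy) (sd := sx)) => //; first by rewrite eq_sym.
  exact: leq_trans (leq_sub2r sx (ltnW Rxy)) (leq_sub2l _ hs).
have vlt : val (g x) < val (g y) by rewrite gx gy ltn_exp2l ?p_gt1.
have ole : p ^ (RR y - sy) <= p ^ (RR x - sx).
  rewrite -(ord_pow (rpos _) gx (ltnW sxR)) -(ord_pow (rpos _) gy (ltnW syR)) leqNgt.
  by apply/negP => ho; apply: V.
rewrite leq_exp2l ?p_gt1 // in ole.
exists (zap y g); first exact: zap_normal.
split; last exact: zap_mu.
apply: (kill (c := x) (d := y) (sc := sx) (sd := sy)) => //.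
exact: ltnW.
Qed.

Lemma exists_rep N : forall g : G, mu g < N -> normal g ->
  exists2 h, representative h & aut_equiv g h.
Proof.
elim: N => // N IH g mg gN.
case: (classic (representative g)) => rg.
  by exists g => //; apply: aut_refl.
have [g' g'N [e lt]] := step gN rg.
have [h rh eh] := IH g' ltac:(lia) g'N.
by exists h => //; apply: aut_trans e eh.
Qed.

Lemma main_sec :
  (forall g h : G,
      representative g -> representative h -> aut_equiv g h -> g = h) /\
  (forall g : G, exists! h : G, representative h /\ aut_equiv g h).
Proof.
split.
  move=> g h gR hR e; apply: uniq_rep => //; exact: Inv_aut e.
move=> g.
have [g1 g1N e1] := normalize g.
have [h hR eh] := exists_rep (ltnSn (mu g1)) g1N.
have egh := aut_trans e1 eh.
exists h; split; first by split.
move=> h' [h'R e'].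
apply: uniq_rep => // a t.
by rewrite -(Inv_aut egh) (Inv_aut e').
Qed.

End Main.

Theorem mainTheorem5 (p n : nat) (r k : 'I_n -> nat) :
  prime p ->
  (forall i : 'I_n, 0 < r i) ->
  (forall i j : 'I_n, i < j -> r i < r j) ->
  (forall i : 'I_n, 0 < k i) ->
  (forall g h : Gp p r k,
      representative g -> representative h -> aut_equiv g h -> g = h) /\
  (forall g : Gp p r k, exists! h : Gp p r k, representative h /\ aut_equiv g h).
Proof. move=> pP rpos rmono kpos; exact: main_sec. Qed.
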